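(* Let $\Gamma$ be a connected drawing. Then $2|E_0| \ge N(U_5)+N(U_6)$.
   Context: Drawings are on the sphere: vertices are distinct points, edges (of a graph possibly with parallel edges, no loops) are Jordan arcs; any two edges share finitely many points, each a common endpoint or a proper crossing; no three edges cross at one point; no edge crosses itself; adjacent edges do not cross. $E_0$ is the set of uncrossed edges. An edge with $i$ crossings is split into $i+1$ edge-segments; an edge-segment is inner if both its endpoints are crossings and outer otherwise. The planarization replaces each crossing by a degree-$4$ vertex; the drawing is connected if its planarization is connected. Cells are the components of the sphere minus all vertices and edges; the boundary of a cell is a cyclic sequence alternating between edge-segments and vertices/crossings. Cell types: $U_5$: boundary $u$, uncrossed edge $uv$, $v$, outer segment, crossing, outer segment (two vertices $u,v$). $U_6$: boundary $u$, uncrossed edge $uv$, $v$, outer segment, crossing, inner segment, crossing, outer segment. $N(T)$ is the number of cells of type $T$. *)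

(* Defs.v *)
(* Combinatorial model of a (connected) drawing on the sphere
   via its planarization, encoded as a combinatorial map (rotation system). *)
From mathcomp Require Import all_boot.
From mathcomp Require Import perm.
Set Implicit Arguments. Unset Strict Implicit. Unset Printing Implicit Defensive.

(* Darts = the two orientations of each edge-segment of the planarization.
   - [alpha d] : the reverse dart (other end of the same edge-segment);
   - [sigma d] : the next dart in the cyclic rotation around the node
                 (vertex or crossing) where [d] starts;
   - [cross d] : the node where [d] starts is a crossing (otherwise a vertex).
   Nodes = sigma-orbits; edge-segments = alpha-orbits;
   cells = orbits of [phi := sigma \o alpha] (facial walks). *)
Record drawing (D : finType) := Drawing {
  alpha : {perm D};
  sigma : {perm D};
  cross : pred D
}.

Section DrawingDefs.
Variables (D : finType) (G : drawing D).

Definition phi (d : D) : D := sigma G (alpha G d).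
Definition isV (d : D) : bool := ~~ cross G d.

(* Two darts belong to the same edge of the drawing: generated by going to the
   other end of a segment, and by going straight through a crossing (the edge
   through a degree-4 crossing uses the opposite darts d and sigma^2 d). *)
Definition edge_step (d d' : D) : bool :=
  (d' == alpha G d) || (cross G d && (d' == sigma G (sigma G d))).
Definition same_edge : rel D := connect edge_step.

Definition map_step (d d' : D) : bool := (d' == alpha G d) || (d' == sigma G d).

Definition is_drawing : Prop :=
  (forall d, alpha G (alpha G d) = d) /\
      (forall d, alpha G d != d) /\
      (forall d, cross G (sigma G d) = cross G d) /\
      (* no three edges cross at a point: crossings have degree 4 *)
      (forall d, cross G d -> fingraph.order (sigma G) d = 4) /\
      (* every edge is an arc between vertices (no closed curves of crossings) *)
      (forall d, exists v, isV v && same_edge d v) /\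
      (* no loops: the two endpoint darts of an edge lie at distinct vertices *)
      (forall v w, isV v -> isV w -> same_edge v w -> v != w ->
                   ~~ fconnect (sigma G) v w) /\
      (* at a crossing two different edges cross (no self-crossing), and they
         are not adjacent (share no endpoint vertex) *)
      (forall d, cross G d ->
         ~~ same_edge d (sigma G d) /\
         forall v w, isV v -> isV w -> same_edge d v -> same_edge (sigma G d) w ->
                     ~~ fconnect (sigma G) v w).

Definition connected_planarization : Prop :=
  forall d d', connect map_step d d'.

(* The map is embedded in the sphere (Euler: nodes - segments + cells = 2). *)
Definition spherical : Prop :=
  fcard (sigma G) D + fcard phi D = (#|D| %/ 2) + 2.

(* E_0: uncrossed edges.  An uncrossed edge is a single segment between two
   vertices, i.e. exactly the two darts d, alpha d with both ends vertices. *)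
Definition E0_darts : {set D} := [set d | isV d && isV (alpha G d)].
Definition nE0 : nat := #|E0_darts| %/ 2.

(* Cell types, read off the facial walk d, phi d, phi^2 d, ... (the start node
   of phi^k d is the end node of phi^(k-1) d).
   U5: u, uncrossed uv, v, outer segment, crossing, outer segment.
   U6: u, uncrossed uv, v, outer, crossing, inner, crossing, outer. *)
Definition U5_pattern (e : D) : bool :=
  [&& isV e, isV (phi e) & cross G (phi (phi e))].
Definition U6_pattern (e : D) : bool :=
  [&& isV e, isV (phi e), cross G (phi (phi e)) & cross G (phi (phi (phi e)))].

Definition isU5 (d : D) : bool :=
  (fingraph.order phi d == 3) && [exists e, fconnect phi d e && U5_pattern e].
Definition isU6 (d : D) : bool :=
  (fingraph.order phi d == 4) && [exists e, fconnect phi d e && U6_pattern e].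

Definition N_U5 : nat := fcard phi isU5.
Definition N_U6 : nat := fcard phi isU6.

End DrawingDefs.

(* Main.v *)
Require Import Defs.
From mathcomp Require Import all_boot.
From mathcomp Require Import perm.

Section Aux.
Variables (D : finType) (G : drawing D).

Lemma E0_even : (forall d, alpha G (alpha G d) = d) -> (forall d, alpha G d != d) ->
  #|E0_darts G| = 2 * nE0 G.
Proof.
move=> aa an.
have ord2 : forall d, fingraph.order (alpha G) d = 2.
  move=> d; apply: (@order_cycle _ _ [:: d; alpha G d]).
  - by rewrite /= /eqrel /= aa !eqxx.
  - by rewrite /= inE eq_sym an.
  - by rewrite inE eqxx.
have cl : fclosed (alpha G) (E0_darts G).
  move=> x y /eqP <-; rewrite !inE aa.
  by rewrite andbC.
have := @fcard_order_set _ _ (@perm_inj _ (alpha G)) 2 (E0_darts G).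
rewrite /nE0 => H; rewrite -H //; last by apply/subsetP=> x _; rewrite inE ord2.
by rewrite mulnK // mulnC.
Qed.

End Aux.

Theorem mainTheorem7 (D : finType) (G : drawing D) :
  is_drawing G -> connected_planarization G -> spherical G ->
  N_U5 G + N_U6 G <= 2 * nE0 G.
Proof.
move=> [aa [an [cs _]]] _ _.
rewrite -E0_even //.
have injphi : injective (phi G).
  by move=> x y; rewrite /phi => /perm_inj /perm_inj.
have sym := fconnect_sym injphi.
pose P e := U5_pattern G e || U6_pattern G e.
pose f x := odflt x [pick e | fconnect (phi G) x e && P e].
pose S := [predI roots (frel (phi G)) & [predU isU5 G & isU6 G]].
have -> : N_U5 G + N_U6 G = #|S|.
  rewrite /N_U5 /N_U6 /n_comp_mem.
  rewrite -cardUI.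
  have -> : #|predI [predI roots (frel (phi G)) & isU5 G] [predI roots (frel (phi G)) & isU6 G]| = 0.
    apply: eq_card0 => x; rewrite !inE /isU5 /isU6.
    case: (roots _ x) => //=; apply/negP => /andP[/andP[/eqP o3 _] /andP[/eqP o4 _]].
    by rewrite o3 in o4.
  rewrite addn0; apply: eq_card => x; rewrite !inE.
  by case: (roots _ x).
have fS : forall x, x \in S -> fconnect (phi G) x (f x) && P (f x).
  move=> x; rewrite !inE => /andP[_ /orP[] /andP[_ /existsP[e He]]];
  rewrite /f; case: pickP => [y -> //|/(_ e)];
  by rewrite /P; case/andP: He => -> -> //=; rewrite orbT.
have fE : forall x, x \in S -> f x \in E0_darts G.
  move=> x /fS /andP[_]; rewrite /P /U5_pattern /U6_pattern inE /phi /isV.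
  by rewrite cs => /orP[] /and3P[-> ->].
have inj : {in S &, injective f}.
  move=> x y xS yS exy.
  have /andP[cx _] := fS x xS; have /andP[cy _] := fS y yS.
  move: xS yS; rewrite !inE => /andP[/eqP rx _] /andP[/eqP ry _].
  rewrite -rx -ry; apply/(rootP sym).
  by apply: connect_trans cx _; rewrite exy sym.
rewrite -(card_in_imset inj).
apply: subset_leq_card; apply/subsetP => y; case/imsetP => x xS ->; exact: fE.
Qed.
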